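(* Let $d$ be a positive integer and $n$ a non-negative integer. A nonempty set $\Gamma\subseteq\mathbb{N}_0^d$ is a contractive projection set for $H^{2(n+1)}(\mathbb{T}^d)$ if and only if $E_n(\Gamma)=\Gamma$.
   Context: $\mathbb{T}^d$ is the $d$-dimensional torus with normalized Haar measure $m_d$; $\widehat f(\alpha)=\int_{\mathbb{T}^d} f\,\overline{z^\alpha}\,dm_d$. $\mathbb{N}_0=\{0,1,2,\dots\}$. $H^p(\mathbb{T}^d)$ is the subspace of $L^p(\mathbb{T}^d)$ of functions with $\widehat f(\alpha)=0$ for $\alpha\notin\mathbb{N}_0^d$. For $\Gamma\subseteq\mathbb{N}_0^d$, $P_\Gamma$ is densely defined by $P_\Gamma f(z)=\sum_{\alpha\in\Gamma}\widehat f(\alpha)z^\alpha$, and $\Gamma$ is a contractive projection set for $H^p(\mathbb{T}^d)$ if $P_\Gamma$ extends to a contraction on $H^p(\mathbb{T}^d)$. For nonempty $\Gamma\subseteq\mathbb{N}_0^d$, $\Lambda(\Gamma)$ denotes the coset in $\mathbb{Z}^d$ generated by $\Gamma$ (the smallest coset of a subgroup of $\mathbb{Z}^d$ containing $\Gamma$); every $\lambda\in\Lambda(\Gamma)$ can be written as $\lambda=\gamma+\sum_{\alpha\in\Gamma,\alpha\neq\gamma}m_{\gamma,\alpha}(\alpha-\gamma)$ with $\gamma\in\Gamma$ and integers $m_{\gamma,\alpha}$, finitely many nonzero. The distance $d(\Gamma,\lambda)$ is the infimum, over all such representations (any $\gamma\in\Gamma$), of $\max\big(\sum_{m_{\gamma,\alpha}>0}m_{\gamma,\alpha},\,-\sum_{m_{\gamma,\alpha}<0}m_{\gamma,\alpha}\big)$.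 The $n$-extension of $\Gamma$ is $E_n(\Gamma)=\{\lambda\in\Lambda(\Gamma)\cap\mathbb{N}_0^d: d(\Gamma,\lambda)\leq n\}$. *)

(* Defs.v *)
From Stdlib Require Import Reals ZArith List Lia Lra ClassicalEpsilon.
From Coquelicot Require Import Coquelicot.
Open Scope R_scope.

(** Multi-indices: integer vectors, encoded as functions nat -> Z;
    a point of Z^d is such a function vanishing at every index >= d. *)
Definition mindex := nat -> Z.

Definition in_Zd (d : nat) (a : mindex) : Prop :=
  forall i, (d <= i)%nat -> a i = 0%Z.

Definition in_N0d (d : nat) (a : mindex) : Prop :=
  in_Zd d a /\ (forall i, (i < d)%nat -> (0 <= a i)%Z).

(** Points of T^d are parametrised by t ∈ [0,1)^d (t : nat -> R, only the
    first d coordinates matter), z_j = exp(2 π i t_j).  z^α : *)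
Fixpoint dot (d : nat) (a : mindex) (t : nat -> R) : R :=
  match d with
  | O => 0
  | S d' => dot d' a t + IZR (a d') * t d'
  end.

Definition monomial (d : nat) (a : mindex) (t : nat -> R) : C :=
  (cos (2 * PI * dot d a t), sin (2 * PI * dot d a t)).

Definition tpoly := list (mindex * C).

Definition analytic_poly (d : nat) (f : tpoly) : Prop :=
  List.Forall (fun p => in_N0d d (fst p)) f.

Definition tpoly_eval (d : nat) (f : tpoly) (t : nat -> R) : C :=
  fold_right (fun p acc => Cplus (Cmult (snd p) (monomial d (fst p) t)) acc) (RtoC 0) f.

Definition P_Gamma (Gamma : mindex -> Prop) (f : tpoly) : tpoly :=
  filter (fun p => if excluded_middle_informative (Gamma (fst p)) then true else false) f.

(** Integral over T^d against normalised Haar measure m_d, as an iterated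
    integral over [0,1]^d (coordinate 0 outermost). *)
Definition cons_pt (s : R) (t : nat -> R) : nat -> R :=
  fun i => match i with O => s | S j => t j end.

Fixpoint torus_int (d : nat) (g : (nat -> R) -> R) : R :=
  match d with
  | O => g (fun _ => 0)
  | S d' => RInt (fun s => torus_int d' (fun t => g (cons_pt s t))) 0 1
  end.

Definition Lp_norm (d p : nat) (f : tpoly) : R :=
  let I := torus_int d (fun t => Cmod (tpoly_eval d f t) ^ p) in
  if Req_EM_T I 0 then 0 else Rpower I (/ INR p).

(** Γ is a contractive projection set for H^p(T^d): P_Γ, densely defined on the
    analytic polynomials, is contractive there (equivalently extends to a
    contraction of H^p). *)
Definition contractive_projection_set (d p : nat) (Gamma : mindex -> Prop) : Prop :=
  forall f : tpoly, analytic_poly d f ->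
    Lp_norm d p (P_Gamma Gamma f) <= Lp_norm d p f.

Definition pos_sum (l : list (mindex * Z)) : Z :=
  fold_right (fun p acc => (Z.max (snd p) 0 + acc)%Z) 0%Z l.
Definition neg_sum (l : list (mindex * Z)) : Z :=
  fold_right (fun p acc => (Z.max (- snd p) 0 + acc)%Z) 0%Z l.

(** l (a finite list of pairs (α, m_{γ,α}), with distinct α ∈ Γ \ {γ}) together
    with γ ∈ Γ is a representation of λ:
    λ = γ + Σ m_{γ,α} (α - γ). *)
Definition is_repr (Gamma : mindex -> Prop) (lam gam : mindex)
    (l : list (mindex * Z)) : Prop :=
  Gamma gam /\
  List.Forall (fun p => Gamma (fst p) /\ fst p <> gam) l /\
  NoDup (map fst l) /\
  (forall i, lam i =
     (gam i + fold_right (fun p acc => snd p * (fst p i - gam i) + acc) 0 l)%Z).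

(** d(Γ,λ) <= k : the infimum of the (natural-number valued) costs of the
    representations of λ is at most k, i.e. some representation has cost <= k. *)
Definition dist_le (Gamma : mindex -> Prop) (lam : mindex) (k : nat) : Prop :=
  exists gam l, is_repr Gamma lam gam l /\
    (Z.max (pos_sum l) (neg_sum l) <= Z.of_nat k)%Z.

Definition in_coset (Gamma : mindex -> Prop) (lam : mindex) : Prop :=
  exists gam l, is_repr Gamma lam gam l.

Definition E_ext (d n : nat) (Gamma : mindex -> Prop) (lam : mindex) : Prop :=
  in_coset Gamma lam /\ in_N0d d lam /\ dist_le Gamma lam n.

(* Main.v *)
Require Import Defs.
From Stdlib Require Import Reals ZArith List Lia Lra ClassicalEpsilon FunctionalExtensionality.
From Coquelicot Require Import Coquelicot.
Open Scope R_scope.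


Lemma Ceq (a b : C) : fst a = fst b -> snd a = snd b -> a = b.
Proof. destruct a, b; simpl; intros; subst; reflexivity. Qed.

Definition zero_idx : mindex := fun _ => 0%Z.
Definition addm (a b : mindex) : mindex := fun i => (a i + b i)%Z.
Definition negm (a : mindex) : mindex := fun i => (- a i)%Z.

Definition tmul (F G : tpoly) : tpoly :=
  flat_map (fun p => map (fun q => (addm (fst p) (fst q), Cmult (snd p) (snd q))) G) F.
Definition tconj (F : tpoly) : tpoly := map (fun p => (negm (fst p), Cconj (snd p))) F.
Definition tone : tpoly := (zero_idx, RtoC 1) :: nil.
Fixpoint tpow (F : tpoly) (m : nat) : tpoly :=
  match m with O => tone | S m' => tmul F (tpow F m') end.
Definition tscale (c : C) (F : tpoly) : tpoly := map (fun p => (fst p, Cmult c (snd p))) F.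
Fixpoint Cpw (z : C) (m : nat) : C :=
  match m with O => RtoC 1 | S m' => Cmult z (Cpw z m') end.

Lemma dot_add d a b t : dot d (addm a b) t = dot d a t + dot d b t.
Proof. induction d; simpl; [lra|]. rewrite IHd; unfold addm; rewrite plus_IZR; ring. Qed.
Lemma dot_neg d a t : dot d (negm a) t = - dot d a t.
Proof. induction d; simpl; [lra|]. rewrite IHd; unfold negm; rewrite opp_IZR; ring. Qed.
Lemma dot_zero d t : dot d zero_idx t = 0.
Proof. induction d; simpl; [lra|]. rewrite IHd; unfold zero_idx; simpl; ring. Qed.

Definition ex (x : R) : C := (cos (2 * PI * x), sin (2 * PI * x)).
Lemma ex_add x y : ex (x + y) = Cmult (ex x) (ex y).
Proof.
  unfold ex, Cmult; simpl. replace (2 * PI * (x + y)) with (2*PI*x + 2*PI*y) by ring.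
  rewrite cos_plus, sin_plus. apply Ceq; simpl; ring.
Qed.
Lemma monomial_ex d a t : monomial d a t = ex (dot d a t).
Proof. reflexivity. Qed.

Lemma monomial_add d a b t : monomial d (addm a b) t = Cmult (monomial d a t) (monomial d b t).
Proof. rewrite !monomial_ex, dot_add, ex_add; reflexivity. Qed.
Lemma monomial_neg d a t : monomial d (negm a) t = Cconj (monomial d a t).
Proof.
  rewrite !monomial_ex, dot_neg; unfold ex, Cconj; simpl.
  replace (2 * PI * - dot d a t) with (- (2 * PI * dot d a t)) by ring.
  rewrite cos_neg, sin_neg; reflexivity.
Qed.
Lemma monomial_zero d t : monomial d zero_idx t = RtoC 1.
Proof.
  rewrite monomial_ex, dot_zero; unfold ex. rewrite Rmult_0_r, cos_0, sin_0; reflexivity.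
Qed.

Lemma eval_app d F G t : tpoly_eval d (F ++ G) t = Cplus (tpoly_eval d F t) (tpoly_eval d G t).
Proof.
  induction F as [|p F IH]; simpl.
  - apply Ceq; simpl; ring.
  - rewrite IH. apply Ceq; simpl; ring.
Qed.

Lemma eval_tmul d F G t : tpoly_eval d (tmul F G) t = Cmult (tpoly_eval d F t) (tpoly_eval d G t).
Proof.
  unfold tmul; induction F as [|p F IH]; simpl.
  - apply Ceq; simpl; ring.
  - rewrite eval_app, IH.
    assert (H : tpoly_eval d (map (fun q => (addm (fst p) (fst q), Cmult (snd p) (snd q))) G) t
      = Cmult (Cmult (snd p) (monomial d (fst p) t)) (tpoly_eval d G t)).
    { clear IH; induction G as [|q G IHG]; simpl.
      - apply Ceq; simpl; ring.
      - rewrite IHG, monomial_add. apply Ceq; simpl; ring. }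
    rewrite H. apply Ceq; simpl; ring.
Qed.

Lemma eval_tconj d F t : tpoly_eval d (tconj F) t = Cconj (tpoly_eval d F t).
Proof.
  induction F as [|p F IH]; simpl.
  - apply Ceq; simpl; ring.
  - rewrite IH, monomial_neg. apply Ceq; simpl; ring.
Qed.

Lemma eval_tone d t : tpoly_eval d tone t = RtoC 1.
Proof. simpl. rewrite monomial_zero. apply Ceq; simpl; ring. Qed.

Lemma eval_tpow d F m t : tpoly_eval d (tpow F m) t = Cpw (tpoly_eval d F t) m.
Proof. induction m; simpl. apply eval_tone. rewrite eval_tmul, IHm; reflexivity. Qed.

Lemma eval_tscale d c F t : tpoly_eval d (tscale c F) t = Cmult c (tpoly_eval d F t).
Proof.
  induction F as [|p F IH]; simpl.
  - apply Ceq; simpl; ring.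
  - rewrite IH. apply Ceq; simpl; ring.
Qed.

Definition nrm2 (z : C) : R := fst z ^ 2 + snd z ^ 2.
Lemma Cpw_real r m : Cpw (r, 0) m = (r ^ m, 0).
Proof. induction m; simpl. reflexivity. rewrite IHm. apply Ceq; simpl; ring. Qed.
Lemma zzbar z : Cmult z (Cconj z) = (nrm2 z, 0).
Proof. unfold nrm2; apply Ceq; simpl; ring. Qed.
Lemma Cmod_pow2m z m : ((Cmod z) ^ (2 * m))%R = nrm2 z ^ m.
Proof.
  rewrite pow_mult. unfold Cmod, nrm2. rewrite pow2_sqrt; [reflexivity|].
  pose proof (pow2_ge_0 (fst z)); pose proof (pow2_ge_0 (snd z)); lra.
Qed.


Lemma convex_pow n x y : 0 <= x -> 0 <= y -> x ^ (S n) + INR (S n) * x ^ n * (y - x) <= y ^ (S n).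
Proof.
  intros Hx Hy. induction n.
  - simpl. lra.
  - assert (Hxn : 0 <= x ^ n) by (apply pow_le; lra).
    assert (H2 : 0 <= INR (S n) * x ^ n * ((y - x) * (y - x))).
    { apply Rmult_le_pos. apply Rmult_le_pos. apply pos_INR. exact Hxn. pose proof (Rle_0_sqr (y-x)); unfold Rsqr in *; lra. }
    change (y ^ S (S n)) with (y * y ^ (S n)).
    apply Rle_trans with (y * (x ^ S n + INR (S n) * x ^ n * (y - x))).
    2: { apply Rmult_le_compat_l; assumption. }
    rewrite !S_INR in *. simpl in *.
    match goal with |- ?L <= ?R => assert (E : R - L = (INR n + 1) * x ^ n * ((y - x) * (y - x))) by ring end.
    lra.
Qed.

Lemma taylor_up X n : 0 <= X -> exists K, 0 <= K /\ forall x u, 0 <= x <= X -> 0 <= x + u <= X + 1 ->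
  (x + u) ^ (S n) <= x ^ (S n) + INR (S n) * x ^ n * u + K * u ^ 2.
Proof.
  intros HX. induction n.
  - exists 0. split. lra. intros. simpl. lra.
  - destruct IHn as [K [HK H]].
    exists ((X + 1) * K + INR (S n) * X ^ n). split.
    { apply Rplus_le_le_0_compat. apply Rmult_le_pos; lra. apply Rmult_le_pos. apply pos_INR. apply pow_le; lra. }
    intros x u Hx Hxu.
    specialize (H x u Hx Hxu).
    change ((x + u) ^ S (S n)) with ((x + u) * (x + u) ^ (S n)).
    apply Rle_trans with ((x + u) * (x ^ S n + INR (S n) * x ^ n * u + K * u ^ 2)).
    { apply Rmult_le_compat_l; lra. }
    assert (Hxn : x ^ n <= X ^ n) by (apply pow_incr; lra).
    assert (Hu2 : 0 <= u ^ 2) by (apply pow2_ge_0).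
    assert (A1 : (x + u) * (K * u ^ 2) <= (X + 1) * K * u ^ 2).
    { replace ((x + u) * (K * u ^ 2)) with ((x + u) * (K * u ^ 2)) by ring.
      rewrite Rmult_assoc. apply Rmult_le_compat_r. apply Rmult_le_pos; lra. lra. }
    assert (A2 : INR (S n) * x ^ n * u ^ 2 <= INR (S n) * X ^ n * u ^ 2).
    { apply Rmult_le_compat_r. exact Hu2. apply Rmult_le_compat_l. apply pos_INR. exact Hxn. }
    replace (S (S n)) with (S (S n)) by reflexivity.
    rewrite !S_INR in *. simpl. simpl in A1, A2.
    match goal with |- ?L <= ?R => assert (E : R - L = (X + 1) * K * u ^ 2 - (x + u) * (K * u ^ 2) + ((INR n + 1) * X ^ n * u ^ 2 - (INR n + 1) * x ^ n * u ^ 2)) by ring end.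
    lra.
Qed.


Lemma sin2pik k : sin (2 * PI * IZR k) = 0.
Proof. apply sin_eq_0_1. exists (2 * k)%Z. rewrite mult_IZR. ring. Qed.
Lemma cos2pik k : cos (2 * PI * IZR k) = 1.
Proof.
  replace (2 * PI * IZR k) with (2 * (PI * IZR k)) by ring.
  rewrite cos_2a_sin. rewrite sin_eq_0_1. ring. exists k; ring.
Qed.

Lemma is_RInt_val (f : R -> R) (a b l l' : R) : is_RInt f a b l -> l = l' -> is_RInt f a b l'.
Proof. intros H ->; exact H. Qed.

Lemma is_RInt_ex1 (k : Z) (c : C) :
  is_RInt (fun s => fst (Cmult c (ex (IZR k * s)))) 0 1
    (if Z.eq_dec k 0 then fst c else 0).
Proof.
  destruct (Z.eq_dec k 0) as [->|Hk].
  - apply is_RInt_ext with (fun s => fst c).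
    { intros x _. unfold ex; simpl. rewrite !Rmult_0_l, Rmult_0_r, cos_0, sin_0. ring. }
    eapply is_RInt_val. apply is_RInt_const. unfold scal; simpl; unfold mult; simpl. ring.
  - assert (Hk' : IZR k <> 0) by (apply not_0_IZR; exact Hk).
    assert (HP : PI <> 0) by (pose proof PI_RGT_0; lra).
    eapply is_RInt_val.
    + apply (is_RInt_derive (fun s => (fst c * sin (2 * PI * (IZR k * s)) + snd c * cos (2 * PI * (IZR k * s))) / (2 * PI * IZR k))).
      * intros x _. auto_derive; [exact I|]. unfold ex; simpl. field. split; assumption.
      * intros x _. apply (ex_derive_continuous (V := R_CompleteNormedModule)). unfold ex; simpl. auto_derive. exact I.
    + unfold minus, plus, opp; simpl. rewrite !Rmult_0_r, Rmult_1_r, sin_0, cos_0, sin2pik, cos2pik.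
      field. split; assumption.
Qed.

Definition zb (d : nat) (a : mindex) : Prop := forall i, (i < d)%nat -> a i = 0%Z.
Definition Zval (d : nat) (F : tpoly) : R :=
  fold_right (fun p acc => (if excluded_middle_informative (zb d (fst p)) then fst (snd p) else 0) + acc) 0 F.
Definition shiftm (a : mindex) : mindex := fun i => a (S i).
Definition shiftF (s : R) (F : tpoly) : tpoly :=
  map (fun p => (shiftm (fst p), Cmult (snd p) (ex (IZR (fst p 0%nat) * s)))) F.

Lemma dot_cons d a s t : dot (S d) a (cons_pt s t) = IZR (a 0%nat) * s + dot d (shiftm a) t.
Proof.
  induction d.
  - simpl. ring.
  - change (dot (S (S d)) a (cons_pt s t)) with (dot (S d) a (cons_pt s t) + IZR (a (S d)) * cons_pt s t (S d)).
    rewrite IHd. simpl. unfold shiftm. ring.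
Qed.

Lemma eval_cons d F s t : tpoly_eval (S d) F (cons_pt s t) = tpoly_eval d (shiftF s F) t.
Proof.
  induction F as [|p F IH]; simpl. reflexivity.
  rewrite IH. f_equal. rewrite !monomial_ex, dot_cons, ex_add. apply Ceq; simpl; ring.
Qed.

Lemma plus_helper (f g : R -> R) (If Ig : R) : is_RInt f 0 1 If -> is_RInt g 0 1 Ig ->
  is_RInt (fun s => f s + g s) 0 1 (If + Ig).
Proof. intros. apply (is_RInt_plus (V := R_NormedModule)); assumption. Qed.

Lemma zbS d a : zb (S d) a <-> (a 0%nat = 0%Z /\ zb d (shiftm a)).
Proof.
  unfold zb, shiftm; split.
  - intros H; split. apply H; lia. intros i Hi; apply H; lia.
  - intros [H0 H] i Hi. destruct i. exact H0. apply H; lia.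
Qed.

Lemma Zval_RInt d F : is_RInt (fun s => Zval d (shiftF s F)) 0 1 (Zval (S d) F).
Proof.
  induction F as [|p F IH]; simpl.
  - eapply is_RInt_val. apply is_RInt_const. unfold scal; simpl; unfold mult; simpl. ring.
  - destruct p as [a c]; simpl.
    destruct (excluded_middle_informative (zb d (shiftm a))) as [H1|H1];
    destruct (excluded_middle_informative (zb (S d) a)) as [H2|H2].
    + eapply is_RInt_val. apply plus_helper; [apply (is_RInt_ex1 (a 0%nat) c)|exact IH].
      apply zbS in H2. destruct (Z.eq_dec (a 0%nat) 0); [reflexivity|tauto].
    + eapply is_RInt_val. apply plus_helper; [apply (is_RInt_ex1 (a 0%nat) c)|exact IH].
      destruct (Z.eq_dec (a 0%nat) 0); [|reflexivity]. exfalso; apply H2, zbS; tauto.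
    + exfalso; apply H1, zbS, H2.
    + eapply is_RInt_val. apply plus_helper; [apply is_RInt_const|exact IH].
      unfold scal; simpl; unfold mult; simpl. ring.
Qed.

Lemma Zval_0 F : Zval 0 F = fold_right (fun p acc => fst (snd p) + acc) 0 F.
Proof.
  induction F; simpl. reflexivity. rewrite IHF.
  destruct (excluded_middle_informative _) as [H|H]. reflexivity.
  exfalso; apply H; intros i Hi; lia.
Qed.

Lemma torus_Re d F : torus_int d (fun t => fst (tpoly_eval d F t)) = Zval d F.
Proof.
  revert F; induction d; intros F.
  - simpl. rewrite Zval_0. induction F; simpl. reflexivity. rewrite <- IHF.
    rewrite Rmult_0_r, cos_0, sin_0, Rmult_1_r, Rmult_0_r, Rminus_0_r. reflexivity.
  - simpl.
    replace (fun s => torus_int d (fun t => fst (tpoly_eval (S d) F (cons_pt s t))))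
      with (fun s => Zval d (shiftF s F)).
    + apply is_RInt_unique, Zval_RInt.
    + apply functional_extensionality; intros s. rewrite <- IHd. f_equal.
      apply functional_extensionality; intros t. rewrite eval_cons. reflexivity.
Qed.

Lemma Zval_nonneg d F : (forall t, 0 <= fst (tpoly_eval d F t)) -> 0 <= Zval d F.
Proof.
  revert F; induction d; intros F H.
  - rewrite <- torus_Re. simpl. apply H.
  - apply (is_RInt_ge_0 _ 0 1 _ Rle_0_1 (Zval_RInt d F)).
    intros s _. apply IHd. intros t. rewrite <- eval_cons. apply H.
Qed.

Lemma Zval_app d F G : Zval d (F ++ G) = Zval d F + Zval d G.
Proof. induction F; simpl. ring. rewrite IHF; ring. Qed.

Lemma Zval_scale d r F : Zval d (tscale (RtoC r) F) = r * Zval d F.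
Proof.
  induction F; simpl. ring. rewrite IHF.
  destruct a as [a c]; simpl. destruct (excluded_middle_informative _); simpl; ring.
Qed.

Lemma Zval_const d r : Zval d ((zero_idx, RtoC r) :: nil) = r.
Proof.
  simpl. destruct (excluded_middle_informative (zb d zero_idx)) as [_|H]. simpl; ring.
  exfalso; apply H; intros i _; reflexivity.
Qed.

Lemma Zval_zero d F : (forall p, In p F -> ~ zb d (fst p)) -> Zval d F = 0.
Proof.
  induction F; simpl; intros H. reflexivity.
  rewrite IHF by (intros; apply H; auto).
  destruct (excluded_middle_informative _) as [h|h]. exfalso; eapply H; eauto. ring.
Qed.

Lemma Zval_nn d F : (forall p, In p F -> snd p = RtoC 1) -> 0 <= Zval d F.
Proof.
  induction F as [|[a c] F IH]; simpl; intros H. lra.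
  assert (0 <= Zval d F) by (apply IH; intros; apply H; auto).
  assert (Hc : c = RtoC 1) by (apply (H (a, c)); auto). subst c.
  destruct (excluded_middle_informative _); simpl; lra.
Qed.

Lemma Zval_ge1 d F : (forall p, In p F -> snd p = RtoC 1) ->
  (exists p, In p F /\ zb d (fst p)) -> 1 <= Zval d F.
Proof.
  induction F as [|[a c] F IH]; simpl; intros H [p [Hp Hz]]. contradiction.
  assert (Hn : 0 <= Zval d F) by (apply Zval_nn; intros; apply H; auto).
  assert (Hc : c = RtoC 1) by (apply (H (a, c)); auto). subst c.
  destruct Hp as [<-|Hp].
  - destruct (excluded_middle_informative _) as [_|h]; [|tauto]. simpl; lra.
  - assert (1 <= Zval d F) by (apply IH; eauto).
    destruct (excluded_middle_informative _); simpl; lra.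
Qed.


Definition lin (l : list (mindex * Z)) (gam : mindex) (i : nat) : Z :=
  fold_right (fun p acc => (snd p * (fst p i - gam i) + acc)%Z) 0%Z l.

Lemma lin_cons a m l gam i : lin ((a, m) :: l) gam i = (m * (a i - gam i) + lin l gam i)%Z.
Proof. reflexivity. Qed.
Lemma pos_cons a m l : pos_sum ((a, m) :: l) = (Z.max m 0 + pos_sum l)%Z.
Proof. reflexivity. Qed.
Lemma neg_cons a m l : neg_sum ((a, m) :: l) = (Z.max (- m) 0 + neg_sum l)%Z.
Proof. reflexivity. Qed.
Lemma lin_app l1 l2 gam i : lin (l1 ++ l2) gam i = (lin l1 gam i + lin l2 gam i)%Z.
Proof. induction l1; simpl. lia. unfold lin in *; simpl; rewrite IHl1; lia. Qed.
Lemma pos_app l1 l2 : pos_sum (l1 ++ l2) = (pos_sum l1 + pos_sum l2)%Z.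
Proof. induction l1; simpl. lia. unfold pos_sum in *; simpl; rewrite IHl1; lia. Qed.
Lemma neg_app l1 l2 : neg_sum (l1 ++ l2) = (neg_sum l1 + neg_sum l2)%Z.
Proof. induction l1; simpl. lia. unfold neg_sum in *; simpl; rewrite IHl1; lia. Qed.
Lemma pos_nn l : (0 <= pos_sum l)%Z.
Proof. induction l; simpl. lia. unfold pos_sum in *; simpl; lia. Qed.
Lemma neg_nn l : (0 <= neg_sum l)%Z.
Proof. induction l; simpl. lia. unfold neg_sum in *; simpl; lia. Qed.

Lemma normalize (Gamma : mindex -> Prop) gam l :
  List.Forall (fun p => Gamma (fst p)) l ->
  exists l', List.Forall (fun p => Gamma (fst p) /\ fst p <> gam) l' /\ NoDup (map fst l') /\
    (forall i, lin l' gam i = lin l gam i) /\ (pos_sum l' <= pos_sum l)%Z /\ (neg_sum l' <= neg_sum l)%Z.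
Proof.
  induction l as [|[a m] l IH]; intros HF.
  - exists nil. split. constructor. split. constructor. split. reflexivity. simpl; lia.
  - inversion HF as [|? ? Ha HF']; subst. simpl in Ha.
    destruct (IH HF') as [l' [H1 [H2 [H3 [H4 H5]]]]].
    destruct (excluded_middle_informative (a = gam)) as [->|Hne].
    + exists l'. repeat split; auto.
      * intros i; rewrite H3, lin_cons; lia.
      * rewrite pos_cons; lia.
      * rewrite neg_cons; lia.
    + destruct (excluded_middle_informative (In a (map fst l'))) as [Hin|Hnin].
      * apply in_map_iff in Hin. destruct Hin as [[a' m'] [Ea Hin]]. simpl in Ea; subst a'.
        apply in_split in Hin. destruct Hin as [l1 [l2 ->]].
        exists (l1 ++ (a, (m + m')%Z) :: l2). repeat split.
        -- apply Forall_app in H1. destruct H1 as [H1a H1b]. inversion H1b; subst.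
           apply Forall_app; split; auto.
        -- rewrite map_app in *; simpl in *; exact H2.
        -- intros i. rewrite lin_cons, <- H3. rewrite !lin_app, !lin_cons. lia.
        -- rewrite pos_cons. rewrite !pos_app, !pos_cons in *. lia.
        -- rewrite neg_cons. rewrite !neg_app, !neg_cons in *. lia.
      * exists ((a, m) :: l'). repeat split.
        -- constructor; auto.
        -- simpl; constructor; auto.
        -- intros i; rewrite !lin_cons, H3; lia.
        -- rewrite !pos_cons; lia.
        -- rewrite !neg_cons; lia.
Qed.

Lemma In_tmul p F G : In p (tmul F G) ->
  exists p1 p2, In p1 F /\ In p2 G /\ p = (addm (fst p1) (fst p2), Cmult (snd p1) (snd p2)).
Proof.
  unfold tmul; intros H. apply in_flat_map in H. destruct H as [p1 [H1 H2]].
  apply in_map_iff in H2. destruct H2 as [p2 [E H2]]. exists p1, p2; auto.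
Qed.
Lemma tmul_In p1 p2 F G : In p1 F -> In p2 G ->
  In (addm (fst p1) (fst p2), Cmult (snd p1) (snd p2)) (tmul F G).
Proof.
  intros H1 H2; unfold tmul. apply in_flat_map. exists p1; split; auto.
  apply in_map_iff. exists p2; auto.
Qed.
Lemma In_tconj p F : In p (tconj F) -> exists q, In q F /\ p = (negm (fst q), Cconj (snd q)).
Proof. unfold tconj; intros H; apply in_map_iff in H; destruct H as [q [E H]]; exists q; auto. Qed.
Lemma tconj_In q F : In q F -> In (negm (fst q), Cconj (snd q)) (tconj F).
Proof. intros H; unfold tconj; apply in_map_iff; exists q; auto. Qed.

Lemma pow_idx (Gamma : mindex -> Prop) g k p :
  (forall q, In q g -> Gamma (fst q)) ->
  In p (tpow (tmul g (tconj g)) k) ->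
  forall gam, exists l, List.Forall (fun q => Gamma (fst q)) l /\
    (pos_sum l <= Z.of_nat k)%Z /\ (neg_sum l <= Z.of_nat k)%Z /\
    forall i, fst p i = lin l gam i.
Proof.
  intros Hg. revert p; induction k; intros p Hp gam; simpl in Hp.
  - destruct Hp as [<-|[]]. exists nil. split. constructor. split. simpl; lia. split. simpl; lia.
    intros i; reflexivity.
  - apply In_tmul in Hp. destruct Hp as [p1 [p2 [H1 [H2 ->]]]].
    apply In_tmul in H1. destruct H1 as [x [y' [Hx [Hy' ->]]]].
    apply In_tconj in Hy'. destruct Hy' as [y [Hy ->]].
    destruct (IHk p2 H2 gam) as [l [Hl [Hp [Hn Hi]]]].
    exists ((fst x, 1%Z) :: (fst y, (-1)%Z) :: l). split.
    { constructor. apply Hg; auto. constructor. apply Hg; auto. exact Hl. }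
    rewrite !pos_cons, !neg_cons. split. lia. split. lia.
    intros i. rewrite !lin_cons, <- Hi. cbn [fst]. unfold addm, negm. lia.
Qed.

Lemma lin_out l gam i : (forall q, In q l -> fst q i = 0%Z) -> gam i = 0%Z -> lin l gam i = 0%Z.
Proof.
  induction l as [|[a m] l IH]; intros H Hg. reflexivity.
  rewrite lin_cons, IH; [|intros q Hq; apply H; simpl; auto|exact Hg]. rewrite Hg. specialize (H (a, m) (or_introl eq_refl)). simpl in H. rewrite H. lia.
Qed.

Definition negl (l : list (mindex * Z)) : list (mindex * Z) := map (fun p => (fst p, (- snd p)%Z)) l.
Lemma negl_lin l gam i : lin (negl l) gam i = (- lin l gam i)%Z.
Proof. induction l as [|[a m] l IH]. reflexivity. unfold negl; cbn [map fst snd]; fold (negl l). rewrite !lin_cons, IH. lia. Qed.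
Lemma negl_pos l : pos_sum (negl l) = neg_sum l.
Proof. induction l as [|[a m] l IH]. reflexivity. unfold negl; cbn [map fst snd]; fold (negl l). rewrite pos_cons, neg_cons, IH. lia. Qed.
Lemma negl_neg l : neg_sum (negl l) = pos_sum l.
Proof. induction l as [|[a m] l IH]. reflexivity. unfold negl; cbn [map fst snd]; fold (negl l). rewrite pos_cons, neg_cons, IH. lia. Qed.
Lemma negl_Forall (P : mindex -> Prop) l : List.Forall (fun q => P (fst q)) l -> List.Forall (fun q => P (fst q)) (negl l).
Proof. induction 1; simpl; constructor; auto. Qed.

Lemma mk_E (d n : nat) (Gamma : mindex -> Prop) (mu gam : mindex) l :
  Gamma gam -> List.Forall (fun q => Gamma (fst q)) l ->
  (pos_sum l <= Z.of_nat n)%Z -> (neg_sum l <= Z.of_nat n)%Z ->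
  (forall i, mu i = (gam i + lin l gam i)%Z) -> in_N0d d mu -> E_ext d n Gamma mu.
Proof.
  intros Hg Hl Hp Hn Hmu HN.
  destruct (normalize Gamma gam l Hl) as [l' [H1 [H2 [H3 [H4 H5]]]]].
  assert (R : is_repr Gamma mu gam l').
  { split. exact Hg. split. exact H1. split. exact H2. intros i. rewrite Hmu, <- H3. reflexivity. }
  split. exists gam, l'. exact R.
  split. exact HN.
  exists gam, l'. split. exact R. lia.
Qed.

Lemma K_nonzero d n (Gamma : mindex -> Prop) g h :
  (forall a, Gamma a -> in_N0d d a) ->
  (forall lam, E_ext d n Gamma lam -> Gamma lam) ->
  (forall q, In q g -> Gamma (fst q)) ->
  (forall q, In q h -> in_N0d d (fst q) /\ ~ Gamma (fst q)) ->
  forall p, In p (tmul (tpow (tmul g (tconj g)) n) (tmul (tconj g) h)) -> ~ zb d (fst p).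
Proof.
  intros HG HE Hg Hh p Hp Hz.
  apply In_tmul in Hp. destruct Hp as [p1 [p2 [H1 [H2 ->]]]].
  apply In_tmul in H2. destruct H2 as [y' [mu [Hy' [Hmu ->]]]].
  apply In_tconj in Hy'. destruct Hy' as [y [Hy ->]].
  destruct (pow_idx Gamma g n p1 Hg H1 (fst y)) as [l [Hl [Hpos [Hneg Hi]]]].
  destruct (Hh mu Hmu) as [HmuN HmuG]. apply HmuG.
  apply HE. apply (mk_E d n Gamma (fst mu) (fst y) (negl l)).
  - apply Hg; auto.
  - apply negl_Forall; auto.
  - rewrite negl_pos; auto.
  - rewrite negl_neg; auto.
  - intros i. rewrite negl_lin. destruct (Nat.lt_ge_cases i d) as [Hid|Hid].
    + specialize (Hz i Hid). simpl in Hz. unfold addm, negm in Hz. rewrite <- Hi. lia.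
    + destruct HmuN as [HmuZ _]. rewrite (HmuZ i Hid).
      destruct (HG _ (Hg y Hy)) as [HyZ _]. rewrite (HyZ i Hid).
      rewrite lin_out. lia.
      * intros q Hq. rewrite Forall_forall in Hl. destruct (HG _ (Hl q Hq)) as [HqZ _]. apply HqZ; auto.
      * apply HyZ; auto.
  - exact HmuN.
Qed.

Definition sumL (xs : list mindex) (i : nat) : Z := fold_right (fun x acc => (x i + acc)%Z) 0%Z xs.
Lemma sumL_cons x xs i : sumL (x :: xs) i = (x i + sumL xs i)%Z.
Proof. reflexivity. Qed.
Lemma sumL_app xs ys i : sumL (xs ++ ys) i = (sumL xs i + sumL ys i)%Z.
Proof. induction xs. reflexivity. rewrite <- app_comm_cons, !sumL_cons, IHxs. lia. Qed.
Lemma sumL_repeat a k i : sumL (repeat a k) i = (Z.of_nat k * a i)%Z.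
Proof. induction k. reflexivity. change (repeat a (S k)) with (a :: repeat a k). rewrite sumL_cons, IHk. lia. Qed.

Definition gofL (Ls : list mindex) : tpoly := map (fun b => (b, RtoC 1)) Ls.

Lemma pow_mem Ls xs : forall ys, length xs = length ys -> incl xs Ls -> incl ys Ls ->
  exists p, In p (tpow (tmul (gofL Ls) (tconj (gofL Ls))) (length xs)) /\
    forall i, fst p i = (sumL xs i - sumL ys i)%Z.
Proof.
  induction xs as [|x xs IH]; intros ys Hl Hx Hy.
  - destruct ys; [|discriminate]. exists (zero_idx, RtoC 1). split. simpl; auto. intros; reflexivity.
  - destruct ys as [|y ys]; [discriminate|]. simpl in Hl.
    assert (A1 : incl xs Ls) by (intros a Ha; apply Hx; simpl; auto).
    assert (A2 : incl ys Ls) by (intros a Ha; apply Hy; simpl; auto).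
    destruct (IH ys ltac:(lia) A1 A2) as [p [Hp Hi]].
    assert (Hxg : In (x, RtoC 1) (gofL Ls)) by (apply in_map_iff; exists x; split; auto; apply Hx; simpl; auto).
    assert (Hyg : In (y, RtoC 1) (gofL Ls)) by (apply in_map_iff; exists y; split; auto; apply Hy; simpl; auto).
    pose proof (tconj_In _ _ Hyg) as Hyc.
    pose proof (tmul_In _ _ _ _ Hxg Hyc) as Hxy.
    pose proof (tmul_In _ _ _ _ Hxy Hp) as Hall.
    eexists. split. simpl. exact Hall.
    intros i. cbn [fst]. unfold addm, negm. rewrite Hi, !sumL_cons. lia.
Qed.

Lemma pow_mem' Ls xs ys k : length xs = k -> length ys = k -> incl xs Ls -> incl ys Ls ->
  exists p, In p (tpow (tmul (gofL Ls) (tconj (gofL Ls))) k) /\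
    forall i, fst p i = (sumL xs i - sumL ys i)%Z.
Proof. intros H1 H2 H3 H4. subst k. apply pow_mem; auto. Qed.

Lemma split_l (gam : mindex) l : exists X Y, incl X (map fst l) /\ incl Y (map fst l) /\
  Z.of_nat (length X) = neg_sum l /\ Z.of_nat (length Y) = pos_sum l /\
  forall i, (- lin l gam i = sumL X i - sumL Y i - (Z.of_nat (length X) - Z.of_nat (length Y)) * gam i)%Z.
Proof.
  induction l as [|[a m] l IH].
  - exists nil, nil. split. intros x []. split. intros x []. split. reflexivity. split. reflexivity.
    intros i; reflexivity.
  - destruct IH as [X [Y [HX [HY [LX [LY Hi]]]]]].
    destruct (Z_le_gt_dec 0 m) as [Hm|Hm].
    + exists X, (repeat a (Z.to_nat m) ++ Y). split. intros x Hx; right; apply HX; auto.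
      split. intros x Hx. apply in_app_or in Hx. destruct Hx as [Hx|Hx].
      apply repeat_spec in Hx; subst; left; reflexivity. right; apply HY; auto.
      rewrite pos_cons, neg_cons, length_app, repeat_length. split. lia. split. lia.
      intros i. rewrite lin_cons, sumL_app, sumL_repeat. rewrite Nat2Z.inj_add, Z2Nat.id by lia. rewrite Z.opp_add_distr, (Hi i). ring.
    + exists (repeat a (Z.to_nat (- m)) ++ X), Y. split. intros x Hx. apply in_app_or in Hx. destruct Hx as [Hx|Hx].
      apply repeat_spec in Hx; subst; left; reflexivity. right; apply HX; auto.
      split. intros x Hx; right; apply HY; auto.
      rewrite pos_cons, neg_cons, length_app, repeat_length. split. lia. split. lia.
      intros i. rewrite lin_cons, sumL_app, sumL_repeat. rewrite Nat2Z.inj_add, Z2Nat.id by lia. rewrite Z.opp_add_distr, (Hi i). ring.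
Qed.

Definition all1 (F : tpoly) : Prop := forall p, In p F -> snd p = RtoC 1.
Lemma all1_tmul F G : all1 F -> all1 G -> all1 (tmul F G).
Proof.
  intros HF HG p Hp. apply In_tmul in Hp. destruct Hp as [p1 [p2 [H1 [H2 ->]]]]. simpl.
  rewrite (HF p1 H1), (HG p2 H2). apply Ceq; simpl; ring.
Qed.
Lemma all1_tconj F : all1 F -> all1 (tconj F).
Proof.
  intros HF p Hp. apply In_tconj in Hp. destruct Hp as [q [H ->]]. simpl.
  rewrite (HF q H). apply Ceq; simpl; ring.
Qed.
Lemma all1_tpow F k : all1 F -> all1 (tpow F k).
Proof.
  intros HF; induction k; simpl. intros p [<-|[]]; reflexivity. apply all1_tmul; auto.
Qed.
Lemma all1_gofL Ls : all1 (gofL Ls).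
Proof. intros p Hp. apply in_map_iff in Hp. destruct Hp as [b [<- _]]. reflexivity. Qed.

Lemma K_pos d n (Gamma : mindex -> Prop) lam gam l :
  is_repr Gamma lam gam l -> (Z.max (pos_sum l) (neg_sum l) <= Z.of_nat n)%Z ->
  let g := gofL (gam :: map fst l) in
  1 <= Zval d (tmul (tpow (tmul g (tconj g)) n) (tmul (tconj g) ((lam, RtoC 1) :: nil))).
Proof.
  intros [Hg [Hl [Hnd Hlam]]] Hmax g.
  apply Zval_ge1.
  { apply all1_tmul. apply all1_tpow, all1_tmul. apply all1_gofL. apply all1_tconj, all1_gofL.
    apply all1_tmul. apply all1_tconj, all1_gofL. intros p [<-|[]]; reflexivity. }
  destruct (split_l gam l) as [X [Y [HX [HY [LX [LY Hi]]]]]].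
  set (xs := X ++ repeat gam (n - length X)). set (ys := Y ++ repeat gam (n - length Y)).
  assert (Lxs : length xs = n) by (unfold xs; rewrite length_app, repeat_length; lia).
  assert (Lys : length ys = n) by (unfold ys; rewrite length_app, repeat_length; lia).
  assert (Ixs : incl xs (gam :: map fst l)).
  { intros x Hx. unfold xs in Hx. apply in_app_or in Hx. destruct Hx as [Hx|Hx]. right; apply HX; auto.
    apply repeat_spec in Hx; left; symmetry; exact Hx. }
  assert (Iys : incl ys (gam :: map fst l)).
  { intros x Hx. unfold ys in Hx. apply in_app_or in Hx. destruct Hx as [Hx|Hx]. right; apply HY; auto.
    apply repeat_spec in Hx; left; symmetry; exact Hx. }
  destruct (pow_mem' (gam :: map fst l) xs ys n Lxs Lys Ixs Iys) as [p [Hp Hpi]].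
  assert (Hgg : In (gam, RtoC 1) g) by (left; reflexivity).
  pose proof (tconj_In _ _ Hgg) as Hgc.
  assert (Hlm : In (lam, RtoC 1) ((lam, RtoC 1) :: nil)) by (left; reflexivity).
  pose proof (tmul_In _ _ _ _ Hgc Hlm) as H2.
  pose proof (tmul_In _ _ _ _ Hp H2) as H3.
  eexists. split. exact H3.
  intros i _. simpl. unfold addm, negm. rewrite Hpi, Hlam.
  unfold xs, ys. rewrite !sumL_app, !sumL_repeat. rewrite !Nat2Z.inj_sub by lia. fold (lin l gam i). assert (E : lin l gam i = (- (sumL X i - sumL Y i - (Z.of_nat (length X) - Z.of_nat (length Y)) * gam i))%Z) by (rewrite <- (Hi i); ring). rewrite E. ring.
Qed.


Definition Pw (m : nat) (f : tpoly) : tpoly := tpow (tmul f (tconj f)) m.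

Lemma fst_Pw d m f t : fst (tpoly_eval d (Pw m f) t) = nrm2 (tpoly_eval d f t) ^ m.
Proof.
  unfold Pw. rewrite eval_tpow, eval_tmul, eval_tconj, zzbar, Cpw_real. reflexivity.
Qed.

Lemma Lp_int d m f : torus_int d (fun t => (Cmod (tpoly_eval d f t)) ^ (2 * m))%R = Zval d (Pw m f).
Proof.
  rewrite <- torus_Re. f_equal. apply functional_extensionality; intros t.
  rewrite fst_Pw, Cmod_pow2m. reflexivity.
Qed.

Definition Lpv (I : R) (p : nat) : R := if Req_EM_T I 0 then 0 else Rpower I (/ INR p).

Lemma Lp_norm_eq d m f : Lp_norm d (2 * m) f = Lpv (Zval d (Pw m f)) (2 * m).
Proof. unfold Lp_norm, Lpv. rewrite Lp_int. reflexivity. Qed.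

Lemma Lpv_nn I p : 0 <= Lpv I p.
Proof. unfold Lpv. destruct (Req_EM_T I 0). lra. unfold Rpower. left; apply exp_pos. Qed.

Lemma Lpv_le I1 I2 p : 0 <= I1 <= I2 -> Lpv I1 p <= Lpv I2 p.
Proof.
  intros H. unfold Lpv at 1. destruct (Req_EM_T I1 0). apply Lpv_nn.
  unfold Lpv. destruct (Req_EM_T I2 0). lra.
  apply Rle_Rpower_l. destruct p. simpl. rewrite Rinv_0; lra. left; apply Rinv_0_lt_compat, lt_0_INR; lia. lra.
Qed.

Lemma Lpv_lt I1 I2 p : (0 < p)%nat -> 0 <= I1 < I2 -> Lpv I1 p < Lpv I2 p.
Proof.
  intros Hp H. unfold Lpv. destruct (Req_EM_T I2 0). lra.
  destruct (Req_EM_T I1 0). unfold Rpower; apply exp_pos.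
  apply Rlt_Rpower_l. apply Rinv_0_lt_compat, lt_0_INR; lia. lra.
Qed.

Lemma eval_filter d (P : mindex * C -> bool) f t :
  tpoly_eval d f t = Cplus (tpoly_eval d (filter P f) t) (tpoly_eval d (filter (fun p => negb (P p)) f) t).
Proof.
  induction f as [|p f IH]; simpl. apply Ceq; simpl; ring.
  destruct (P p); simpl; rewrite IH; apply Ceq; simpl; ring.
Qed.

Lemma Zval_fst_app d F G t : fst (tpoly_eval d (F ++ G) t) = fst (tpoly_eval d F t) + fst (tpoly_eval d G t).
Proof. rewrite eval_app. reflexivity. Qed.
Lemma fst_scale d r F t : fst (tpoly_eval d (tscale (RtoC r) F) t) = r * fst (tpoly_eval d F t).
Proof. rewrite eval_tscale. simpl. ring. Qed.

Lemma nrm2_nn z : 0 <= nrm2 z.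
Proof. unfold nrm2. pose proof (pow2_ge_0 (fst z)); pose proof (pow2_ge_0 (snd z)); lra. Qed.

Lemma ineq_suff n zg zh :
  0 <= nrm2 (Cplus zg zh) ^ (S n) - nrm2 zg ^ (S n) - 2 * INR (S n) * (nrm2 zg ^ n * fst (Cmult (Cconj zg) zh)).
Proof.
  pose proof (convex_pow n (nrm2 zg) (nrm2 (Cplus zg zh)) (nrm2_nn _) (nrm2_nn _)) as H.
  assert (E : nrm2 (Cplus zg zh) - nrm2 zg = 2 * fst (Cmult (Cconj zg) zh) + nrm2 zh).
  { unfold nrm2; simpl; ring. }
  rewrite E in H.
  assert (0 <= INR (S n) * nrm2 zg ^ n * nrm2 zh).
  { apply Rmult_le_pos. apply Rmult_le_pos. apply pos_INR. apply pow_le, nrm2_nn. apply nrm2_nn. }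
  assert (E2 : INR (S n) * nrm2 zg ^ n * (2 * fst (Cmult (Cconj zg) zh) + nrm2 zh)
     = 2 * INR (S n) * (nrm2 zg ^ n * fst (Cmult (Cconj zg) zh)) + INR (S n) * nrm2 zg ^ n * nrm2 zh) by ring.
  lra.
Qed.

Lemma fst_K d n g h t :
  fst (tpoly_eval d (tmul (tpow (tmul g (tconj g)) n) (tmul (tconj g) h)) t)
  = nrm2 (tpoly_eval d g t) ^ n * fst (Cmult (Cconj (tpoly_eval d g t)) (tpoly_eval d h t)).
Proof.
  rewrite eval_tmul, eval_tpow, eval_tmul, eval_tmul, !eval_tconj, zzbar, Cpw_real. simpl. ring.
Qed.

Lemma sufficiency d n (Gamma : mindex -> Prop) :
  (forall a, Gamma a -> in_N0d d a) -> (forall lam, E_ext d n Gamma lam -> Gamma lam) ->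
  contractive_projection_set d (2 * (n + 1)) Gamma.
Proof.
  intros HG HE f Hf.
  replace (n + 1)%nat with (S n) by lia.
  rewrite !Lp_norm_eq. apply Lpv_le. split.
  { apply Zval_nonneg; intros t; rewrite fst_Pw; apply pow_le, nrm2_nn. }
  set (P := fun p : mindex * C => if excluded_middle_informative (Gamma (fst p)) then true else false).
  assert (Eg : P_Gamma Gamma f = filter P f) by reflexivity.
  rewrite Eg. set (g := filter P f). set (h := filter (fun p => negb (P p)) f).
  set (K := tmul (tpow (tmul g (tconj g)) n) (tmul (tconj g) h)).
  assert (HK : Zval d K = 0).
  { apply Zval_zero. apply (K_nonzero d n Gamma g h HG HE).
    - intros q Hq. unfold g in Hq. apply filter_In in Hq. destruct Hq as [_ Hq]. unfold P in Hq.
      destruct (excluded_middle_informative _); [assumption|discriminate].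
    - intros q Hq. unfold h in Hq. apply filter_In in Hq. destruct Hq as [Hq1 Hq]. unfold P in Hq.
      split. unfold analytic_poly in Hf. rewrite Forall_forall in Hf. apply (Hf q Hq1).
      destruct (excluded_middle_informative _); [discriminate|assumption]. }
  set (D := Pw (S n) f ++ tscale (RtoC (-1)) (Pw (S n) g) ++ tscale (RtoC (- (2 * INR (S n)))) K).
  assert (HD : 0 <= Zval d D).
  { apply Zval_nonneg. intros t. unfold D. rewrite !Zval_fst_app, !fst_scale, !fst_Pw.
    unfold K; rewrite fst_K. rewrite (eval_filter d P f t). fold g h.
    pose proof (ineq_suff n (tpoly_eval d g t) (tpoly_eval d h t)). lra. }
  unfold D in HD. rewrite !Zval_app, !Zval_scale, HK in HD. lra.
Qed.


Lemma nrm2_Cmod z : nrm2 z = (Cmod z) ^ 2.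
Proof. unfold Cmod, nrm2. rewrite pow2_sqrt; [reflexivity|]. pose proof (pow2_ge_0 (fst z)); pose proof (pow2_ge_0 (snd z)); lra. Qed.

Lemma pert n G K0 z w eps : 0 <= G -> Cmod z <= G -> nrm2 w = 1 -> 0 <= eps <= 1 -> 0 <= K0 ->
  (forall x u, 0 <= x <= (G + 1) ^ 2 -> 0 <= x + u <= (G + 1) ^ 2 + 1 ->
     (x + u) ^ (S n) <= x ^ (S n) + INR (S n) * x ^ n * u + K0 * u ^ 2) ->
  nrm2 (Cplus z (Cmult (RtoC (- eps)) w)) ^ (S n) <=
  nrm2 z ^ (S n) - 2 * INR (S n) * eps * (nrm2 z ^ n * fst (Cmult (Cconj z) w))
  + eps ^ 2 * (INR (S n) * ((G + 1) ^ 2) ^ n + K0 * (2 * G + 1) ^ 2).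
Proof.
  intros HG Hz Hw He HK T.
  set (x := nrm2 z). set (s := fst (Cmult (Cconj z) w)).
  assert (Ex : nrm2 (Cplus z (Cmult (RtoC (- eps)) w)) = x + (- 2 * eps * s + eps ^ 2)).
  { unfold x, s. replace (eps ^ 2) with (eps ^ 2 * nrm2 w) by (rewrite Hw; ring). unfold nrm2; simpl; ring. }
  assert (Hx0 : 0 <= x) by apply nrm2_nn.
  assert (HxG : x <= G ^ 2).
  { unfold x; rewrite nrm2_Cmod. apply pow_incr. split. apply Cmod_ge_0. exact Hz. }
  assert (Hs2 : s ^ 2 <= x).
  { unfold s, x. replace (nrm2 z) with (nrm2 z * nrm2 w) by (rewrite Hw; ring).
    destruct z as [a b], w as [c e]. unfold nrm2; simpl.
    assert (0 <= (a * e - b * c) ^ 2) by apply pow2_ge_0.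
    match goal with |- ?L <= ?R => assert (R - L = (a * e - b * c) ^ 2) by ring end. lra. }
  assert (Hs : Rabs s <= G).
  { rewrite <- (Rabs_pos_eq G HG). apply (Rsqr_le_abs_0 s G). unfold Rsqr. simpl in Hs2, HxG. lra. }
  set (u := - 2 * eps * s + eps ^ 2). fold u in Ex.
  assert (Hu : Rabs u <= eps * (2 * G + 1)).
  { unfold u. eapply Rle_trans. apply Rabs_triang.
    rewrite Rabs_mult, Rabs_mult, (Rabs_pos_eq (eps ^ 2)) by (apply pow_le; lra).
    rewrite (Rabs_left (-2)) by lra. rewrite (Rabs_pos_eq eps) by lra.
    assert (eps ^ 2 <= eps) by (simpl; nra).
    assert (eps * Rabs s <= eps * G) by (apply Rmult_le_compat_l; lra). nra. }
  assert (Hu2 : u ^ 2 <= eps ^ 2 * (2 * G + 1) ^ 2).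
  { rewrite <- Rpow_mult_distr. rewrite <- pow2_abs. apply pow_incr. split. apply Rabs_pos. exact Hu. }
  assert (HxG1 : x <= (G + 1) ^ 2) by (simpl in *; nra).
  assert (Hxu : 0 <= x + u <= (G + 1) ^ 2 + 1).
  { split. rewrite <- Ex. apply nrm2_nn.
    assert (u <= 2 * G + 1).
    { apply Rle_trans with (Rabs u). apply Rle_abs. eapply Rle_trans. exact Hu.
      rewrite <- (Rmult_1_l (2 * G + 1)) at 2. apply Rmult_le_compat_r; lra. }
    simpl in *. nra. }
  rewrite Ex. fold u.
  specialize (T x u (conj Hx0 HxG1) Hxu).
  assert (Hxn : x ^ n <= ((G + 1) ^ 2) ^ n) by (apply pow_incr; lra).
  assert (Hxn0 : 0 <= x ^ n) by (apply pow_le; lra).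
  assert (A1 : INR (S n) * x ^ n * eps ^ 2 <= INR (S n) * ((G + 1) ^ 2) ^ n * eps ^ 2).
  { apply Rmult_le_compat_r. apply pow_le; lra. apply Rmult_le_compat_l. apply pos_INR. exact Hxn. }
  assert (A2 : K0 * u ^ 2 <= K0 * (eps ^ 2 * (2 * G + 1) ^ 2)) by (apply Rmult_le_compat_l; lra).
  assert (E3 : INR (S n) * x ^ n * u = - 2 * INR (S n) * eps * (x ^ n * s) + INR (S n) * x ^ n * eps ^ 2)
    by (unfold u; ring).
  rewrite E3 in T.
  match goal with |- _ <= ?R => assert (E4 : R = x ^ S n - 2 * INR (S n) * eps * (x ^ n * s) + (INR (S n) * ((G + 1) ^ 2) ^ n * eps ^ 2) + K0 * (eps ^ 2 * (2 * G + 1) ^ 2)) by ring end.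
  rewrite E4. lra.
Qed.

Lemma nrm2_mono d a t : nrm2 (monomial d a t) = 1.
Proof. unfold nrm2, monomial; simpl. pose proof (sin2_cos2 (2 * PI * dot d a t)). unfold Rsqr in H. lra. Qed.

Lemma Cmod_gofL d Ls t : Cmod (tpoly_eval d (gofL Ls) t) <= INR (length Ls).
Proof.
  induction Ls as [|b Ls IH].
  - simpl. unfold Cmod; simpl. rewrite Rmult_0_l, Rplus_0_l, sqrt_0. lra.
  - change (tpoly_eval d (gofL (b :: Ls)) t) with (Cplus (Cmult (RtoC 1) (monomial d b t)) (tpoly_eval d (gofL Ls) t)).
    eapply Rle_trans. apply Cmod_triangle.
    assert (Cmod (Cmult (RtoC 1) (monomial d b t)) = 1).
    { replace (Cmult (RtoC 1) (monomial d b t)) with (monomial d b t) by (apply Ceq; simpl; ring).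
      change (Cmod (monomial d b t)) with (sqrt (nrm2 (monomial d b t))). rewrite nrm2_mono. apply sqrt_1. }
    rewrite H, length_cons, S_INR. lra.
Qed.

Lemma filter_all_true {A} (p : A -> bool) l : (forall x, In x l -> p x = true) -> filter p l = l.
Proof. induction l; simpl; intros H. reflexivity. rewrite H by auto. f_equal. apply IHl; auto. Qed.

Lemma necessity d n (Gamma : mindex -> Prop) :
  (forall a, Gamma a -> in_N0d d a) -> contractive_projection_set d (2 * (n + 1)) Gamma ->
  forall lam, E_ext d n Gamma lam -> Gamma lam.
Proof.
  intros HG HC lam [_ [HlamN [gam [l [HR Hmax]]]]].
  destruct (classic (Gamma lam)) as [|Hn]; auto. exfalso.
  set (Ls := gam :: map fst l). set (g := gofL Ls).
  assert (HLs : forall b, In b Ls -> Gamma b).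
  { destruct HR as [Hg [Hl _]]. intros b [<-|Hb]. exact Hg.
    apply in_map_iff in Hb. destruct Hb as [q [<- Hq]]. rewrite Forall_forall in Hl. apply (Hl q Hq). }
  set (K' := tmul (tpow (tmul g (tconj g)) n) (tmul (tconj g) ((lam, RtoC 1) :: nil))).
  assert (HK : 1 <= Zval d K') by (apply (K_pos d n Gamma lam gam l HR Hmax)).
  set (G := INR (length Ls)).
  assert (HG0 : 0 <= G) by apply pos_INR.
  destruct (taylor_up ((G + 1) ^ 2) n) as [K0 [HK0 T]]. { apply pow2_ge_0. }
  set (C0 := INR (S n) * ((G + 1) ^ 2) ^ n + K0 * (2 * G + 1) ^ 2).
  assert (HC0 : 0 <= C0).
  { unfold C0. apply Rplus_le_le_0_compat. apply Rmult_le_pos. apply pos_INR. apply pow_le, pow2_ge_0.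
    apply Rmult_le_pos. lra. apply pow2_ge_0. }
  set (eps := Rmin 1 (1 / (C0 + 1))).
  assert (He1 : 0 < eps <= 1).
  { unfold eps. split. apply Rmin_glb_lt. lra. apply Rdiv_lt_0_compat; lra. apply Rmin_l. }
  assert (HeC : eps * C0 < 1).
  { apply Rle_lt_trans with (1 / (C0 + 1) * C0).
    apply Rmult_le_compat_r. exact HC0. apply Rmin_r.
    unfold Rdiv. rewrite Rmult_1_l. apply (Rmult_lt_reg_l (C0 + 1)). lra.
    rewrite <- Rmult_assoc, Rinv_r by lra. lra. }
  set (f := g ++ (lam, RtoC (- eps)) :: nil).
  assert (Hf : analytic_poly d f).
  { unfold analytic_poly, f. apply Forall_app. split.
    - apply Forall_forall. intros q Hq. unfold g, gofL in Hq. apply in_map_iff in Hq.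
      destruct Hq as [b [<- Hb]]. apply HG, HLs, Hb.
    - constructor. exact HlamN. constructor. }
  assert (HPf : P_Gamma Gamma f = g).
  { unfold P_Gamma, f. rewrite filter_app. rewrite (filter_all_true _ g).
    - match goal with |- g ++ ?X = g => replace X with (@nil (mindex * C)) end. apply app_nil_r.
      unfold filter. cbn [fst]. destruct (excluded_middle_informative (Gamma lam)) as [h|_]; [tauto|reflexivity].
    - intros q Hq. unfold g, gofL in Hq. apply in_map_iff in Hq.
      destruct Hq as [b [<- Hb]]. cbn [fst]. destruct (excluded_middle_informative (Gamma b)) as [_|h]. reflexivity.
      exfalso; apply h, HLs, Hb. }
  specialize (HC f Hf). rewrite HPf in HC.
  replace (n + 1)%nat with (S n) in HC by lia.
  rewrite !Lp_norm_eq in HC.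
  set (D := Pw (S n) g ++ tscale (RtoC (- (2 * INR (S n) * eps))) K' ++
            ((zero_idx, RtoC (eps ^ 2 * C0)) :: nil) ++ tscale (RtoC (-1)) (Pw (S n) f)).
  assert (HD : 0 <= Zval d D).
  { apply Zval_nonneg. intros t. unfold D. rewrite !Zval_fst_app, !fst_scale, !fst_Pw.
    unfold K'. rewrite fst_K.
    assert (Ew : tpoly_eval d ((lam, RtoC 1) :: nil) t = monomial d lam t) by (apply Ceq; simpl; ring).
    assert (Ef : tpoly_eval d f t = Cplus (tpoly_eval d g t) (Cmult (RtoC (- eps)) (monomial d lam t))).
    { unfold f. rewrite eval_app. apply Ceq; simpl; ring. }
    assert (Ec : fst (tpoly_eval d ((zero_idx, RtoC (eps ^ 2 * C0)) :: nil) t) = eps ^ 2 * C0).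
    { change (tpoly_eval d ((zero_idx, RtoC (eps ^ 2 * C0)) :: nil) t) with (Cplus (Cmult (RtoC (eps ^ 2 * C0)) (monomial d zero_idx t)) (RtoC 0)). rewrite monomial_zero. simpl. ring. }
    rewrite Ew, Ef, Ec.
    pose proof (pert n G K0 (tpoly_eval d g t) (monomial d lam t) eps HG0 (Cmod_gofL d Ls t) (nrm2_mono d lam t)
      (conj (Rlt_le _ _ (proj1 He1)) (proj2 He1)) HK0 T) as P.
    fold C0 in P. lra. }
  unfold D in HD. rewrite !Zval_app, !Zval_scale, Zval_const in HD.
  assert (Hnn : 0 <= Zval d (Pw (S n) f)).
  { apply Zval_nonneg; intros t; rewrite fst_Pw; apply pow_le, nrm2_nn. }
  assert (Hlt : Zval d (Pw (S n) f) < Zval d (Pw (S n) g)).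
  { assert (INR (S n) >= 1) by (rewrite S_INR; pose proof (pos_INR n); lra).
    assert (2 * INR (S n) * eps * Zval d K' >= 2 * INR (S n) * eps).
    { rewrite <- (Rmult_1_r (2 * INR (S n) * eps)) at 2. apply Rle_ge, Rmult_le_compat_l. nra. exact HK. }
    assert (eps ^ 2 * C0 < 2 * INR (S n) * eps).
    { assert (eps * C0 < 2 * INR (S n)) by lra.
      replace (eps ^ 2 * C0) with (eps * (eps * C0)) by ring. replace (2 * INR (S n) * eps) with (eps * (2 * INR (S n))) by ring. apply Rmult_lt_compat_l; lra. }
    lra. }
  pose proof (Lpv_lt _ _ (2 * S n) ltac:(lia) (conj Hnn Hlt)). lra.
Qed.


Theorem theorem1p3 (d n : nat) (Gamma : mindex -> Prop) :
  (1 <= d)%nat ->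
  (forall a, Gamma a -> in_N0d d a) ->
  (exists a, Gamma a) ->
  (contractive_projection_set d (2 * (n + 1)) Gamma <->
   (forall lam, E_ext d n Gamma lam <-> Gamma lam)).
Proof.
  intros Hd HG Hne. split.
  - intros HC lam. split. apply (necessity d n Gamma HG HC).
    intros Hl.
    assert (R : is_repr Gamma lam lam nil).
    { split. exact Hl. split. constructor. split. constructor. intros i. simpl. lia. }
    split. exists lam, nil. exact R.
    split. apply HG, Hl.
    exists lam, nil. split. exact R. simpl. lia.
  - intros HE. apply sufficiency. exact HG. intros lam H. apply HE. exact H.
Qed.
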